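(* Let $A$ be a synaptic algebra and $p,q\in P$. With $r_p:=p\wedge(p^{\perp}\vee q)\wedge(p^{\perp}\vee q^{\perp})$, $r_{p^{\perp}}:=p^{\perp}\wedge(p\vee q)\wedge(p\vee q^{\perp})$, $r_q:=q\wedge(p\vee q^{\perp})\wedge(p^{\perp}\vee q^{\perp})$, $r_{q^{\perp}}:=q^{\perp}\wedge(p\vee q)\wedge(p^{\perp}\vee q)$ and $[p,q]:=(p\vee q)\wedge(p\vee q^{\perp})\wedge(p^{\perp}\vee q)\wedge(p^{\perp}\vee q^{\perp})$: (i) $r_p\perp r_{p^{\perp}}$ and $r_q\perp r_{q^{\perp}}$; (ii) $1=(p\wedge q)\oplus(p\wedge q^{\perp})\oplus(p^{\perp}\wedge q)\oplus(p^{\perp}\wedge q^{\perp})\oplus r_p\oplus r_{p^{\perp}}=[p,q]^{\perp}\oplus r_p\oplus r_{p^{\perp}}$; (iii) $1=(p\wedge q)\oplus(p\wedge q^{\perp})\oplus(p^{\perp}\wedge q)\oplus(p^{\perp}\wedge q^{\perp})\oplus r_q\oplus r_{q^{\perp}}=[p,q]^{\perp}\oplus r_q\oplus r_{q^{\perp}}$; (iv) $r_p\oplus r_{p^{\perp}}=r_q\oplus r_{q^{\perp}}=[p,q]$.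
   Context: Synaptic algebra (Foulis): $R$ is a real linear associative algebra with unit $1$, and $A\subseteq R$ is a real linear subspace with $1\in A$. For $a,b\in A$ write $aCb$ iff $ab=ba$; $C(a):=\{b\in A: aCb\}$; $CC(a):=\{b\in A: bCd \text{ for all } d\in C(a)\}$. $A$ is a synaptic algebra with enveloping algebra $R$ iff: (SA1) $A$ is a partially ordered archimedean real linear space with positive cone $A^+$, $1$ is an order unit, $\|\cdot\|$ the order-unit norm; (SA2) $a\in A\Rightarrow a^2\in A^+$; (SA3) $a,b\in A^+\Rightarrow aba\in A^+$; (SA4) if $a\in A$, $b\in A^+$, $aba=0$ then $ab=ba=0$; (SA5) if $a\in A^+$ there is $b\in A^+\cap CC(a)$ with $b^2=a$; (SA6) for $a\in A$ there is $p=p^2\in A$ with $ab=0\Leftrightarrow pb=0$ for all $b\in A$; (SA7) if $1\le a$ there is $b\in A$ with $ab=ba=1$; (SA8) if $a,b\in A$, $a_1\le a_2\le\cdots$ are pairwise commuting elements of $C(b)$ with $\|a-a_n\|\to0$, then $a\in C(b)$. $A$ is nondegenerate. $P:=\{p\in A:p=p^2\}$ with the order inherited from $A$ is an orthomodular lattice with orthocomplement $p^{\perp}:=1-p$, meet $\wedge$, join $\vee$. $p\perp q$ means $p\le q^{\perp}$; for pairwise orthogonal projections the orthosum $\oplus$ is their sum. *)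

(* Defs.v *)
From HB Require Import structures.
From mathcomp Require Import all_boot all_order all_algebra.
From mathcomp Require Import boolp classical_sets reals.
Set Implicit Arguments. Unset Strict Implicit. Unset Printing Implicit Defensive.
Import Order.TTheory GRing.Theory Num.Theory.
Local Open Scope ring_scope.
Local Open Scope classical_set_scope.

Section Synaptic.
Variables (K : realType) (R : algType K).
(* A : the carrier subspace of the enveloping algebra R;
   Apos : the positive cone A^+ *)
Variables (A Apos : set R).

Definition Ale (a b : R) : Prop := Apos (b - a).

Definition Comm (a : R) : set R := [set b | A b /\ a * b = b * a].
Definition DComm (a : R) : set R :=
  [set b | A b /\ forall d, Comm a d -> b * d = d * b].

Definition ounorm (a : R) : K :=
  inf [set l : K | 0 <= l /\ Ale (- (l *: 1)) a /\ Ale a (l *: 1)].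

Record synaptic_algebra : Prop := {
  sa_sub0 : A 0;
  sa_sub1 : A 1;
  sa_subD : forall a b, A a -> A b -> A (a + b);
  sa_subZ : forall (l : K) a, A a -> A (l *: a);
  sa_pos_sub : forall a, Apos a -> A a;
  sa_pos0 : Apos 0;
  sa_posD : forall a b, Apos a -> Apos b -> Apos (a + b);
  sa_posZ : forall (l : K) a, 0 <= l -> Apos a -> Apos (l *: a);
  sa_pos_anti : forall a, Apos a -> Apos (- a) -> a = 0;
  sa_archi : forall a b, A a -> A b ->
    (forall n : nat, Ale (n%:R *: a) b) -> Ale a 0;
  sa_unit : forall a, A a -> exists l : K, Ale (- (l *: 1)) a /\ Ale a (l *: 1);
  sa2 : forall a, A a -> Apos (a * a);
  sa3 : forall a b, Apos a -> Apos b -> Apos (a * b * a);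
  sa4 : forall a b, A a -> Apos b -> a * b * a = 0 -> a * b = 0 /\ b * a = 0;
  sa5 : forall a, Apos a -> exists b, Apos b /\ DComm a b /\ b * b = a;
  sa6 : forall a, A a -> exists p, A p /\ p * p = p /\
          (forall b, A b -> (a * b = 0 <-> p * b = 0));
  sa7 : forall a, A a -> Ale 1 a -> exists b, A b /\ a * b = 1 /\ b * a = 1;
  sa8 : forall a b (s : nat -> R), A a -> A b ->
    (forall n, Comm b (s n)) ->
    (forall m n, s m * s n = s n * s m) ->
    (forall n, Ale (s n) (s n.+1)) ->
    (forall e : K, 0 < e -> exists N, forall n, (N <= n)%N -> ounorm (a - s n) < e) ->
    Comm b a;
  sa_nondeg : (1 : R) <> 0
}.

Definition proj (p : R) : Prop := A p /\ p * p = p.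

Definition pperp (p : R) : R := 1 - p.
Definition porth (p q : R) : Prop := Ale p (pperp q).

Definition is_pmeet (p q m : R) : Prop :=
  proj m /\ Ale m p /\ Ale m q /\
  forall x, proj x -> Ale x p -> Ale x q -> Ale x m.
Definition is_pjoin (p q j : R) : Prop :=
  proj j /\ Ale p j /\ Ale q j /\
  forall x, proj x -> Ale p x -> Ale q x -> Ale j x.
Definition pmeet (p q : R) : R := xget 0 (is_pmeet p q).
Definition pjoin (p q : R) : R := xget 0 (is_pjoin p q).

End Synaptic.

(* Main.v *)
Require Import Defs.
From HB Require Import structures.
From mathcomp Require Import all_boot all_order all_algebra.
From mathcomp Require Import boolp classical_sets reals.
Import Order.TTheory GRing.Theory Num.Theory.
Set Implicit Arguments. Unset Strict Implicit.
Local Open Scope ring_scope.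

Section Aux.
Variables (K : realType) (R : algType K) (A Apos : set R).
Hypothesis HA : synaptic_algebra A Apos.

Definition le (e f : R) := e * f = e.
Notation pr := (proj A).

Lemma A_opp a : A a -> A (- a).
Proof. by move=> Ha; rewrite -scaleN1r; apply: (sa_subZ HA). Qed.
Lemma A_sub a b : A a -> A b -> A (a - b).
Proof. by move=> Ha Hb; apply: (sa_subD HA) => //; apply: A_opp. Qed.

Lemma pr1 : pr 1.
Proof. by split; [apply: (sa_sub1 HA)|rewrite mulr1]. Qed.

Lemma pr_compl e : pr e -> pr (1 - e).
Proof.
move=> [Ae ee]; split; first by apply: A_sub => //; apply: (sa_sub1 HA).
by rewrite mulrBl mul1r mulrBr mulr1 ee subrr subr0.
Qed.

Lemma pr_pos e : pr e -> Apos e.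
Proof. by move=> [Ae ee]; rewrite -ee; apply: (sa2 HA). Qed.

Lemma swap e f : pr e -> pr f -> e * f = e -> f * e = e.
Proof.
move=> pe pf H.
have H1 : e * (1 - f) = 0 by rewrite mulrBr mulr1 H subrr.
have H2 : (1 - f) * e * (1 - f) = 0 by rewrite -mulrA H1 mulr0.
have [Ho _] := sa4 HA (pr_compl pf).1 (pr_pos pe) H2.
by apply/esym/subr0_eq; rewrite -Ho mulrBl mul1r.
Qed.

Lemma Ale_le e f : pr e -> pr f -> Ale Apos e f <-> le e f.
Proof.
move=> pe pf; rewrite /Ale /le; split => H.
  pose X := (1 - f) * e * (1 - f).
  have PX : Apos X by apply: (sa3 HA); [apply: pr_pos; apply: pr_compl|apply: pr_pos].
  have PnX : Apos (- X).
    have := sa3 HA (pr_pos (pr_compl pf)) H.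
    have E : (1 - f) * f = 0 by rewrite mulrBl mul1r pf.2 subrr.
    by rewrite /X [(1 - f) * (f - e)]mulrBr E sub0r mulNr.
  have X0 : X = 0 by apply: (sa_pos_anti HA).
  have [_ Ho] := sa4 HA (pr_compl pf).1 (pr_pos pe) X0.
  by apply/esym/subr0_eq; rewrite -Ho mulrBr mulr1.
have H' := swap pe pf H.
have -> : f - e = (f - e) * (f - e).
  by rewrite mulrBl !mulrBr pf.2 pe.2 H H' subrr subr0.
by apply: (sa2 HA); apply: A_sub; [exact: pf.1|exact: pe.1].
Qed.

Lemma zero_swap e f : pr e -> pr f -> e * f = 0 -> f * e = 0.
Proof.
move=> pe pf H.
have H1 : e * (1 - f) = e by rewrite mulrBr mulr1 H subr0.
have := swap pe (pr_compl pf) H1.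
by rewrite mulrBl mul1r => /eqP; rewrite subr_eq addrC -subr_eq subrr => /eqP <-.
Qed.

Lemma le_trans x y z : le x y -> le y z -> le x z.
Proof. by rewrite /le => H1 H2; rewrite -H1 -mulrA H2. Qed.

Lemma le_anti x y : pr x -> pr y -> le x y -> le y x -> x = y.
Proof. by move=> px py H1 H2; rewrite -{1}(swap px py H1) H2. Qed.

Lemma orth_iff x y : pr x -> pr y -> le x (1 - y) <-> x * y = 0.
Proof.
move=> px py; rewrite /le mulrBr mulr1; split.
  by move/eqP; rewrite subr_eq addrC -subr_eq subrr eq_sym => /eqP.
by move=> ->; rewrite subr0.
Qed.

Lemma compl_le e f : pr e -> pr f -> le e f -> le (1 - f) (1 - e).
Proof.
move=> pe pf H; rewrite /le mulrBl mul1r !mulrBr mulr1 (swap pe pf H).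
by rewrite opprB addrA subrK.
Qed.

Lemma le_zero x y z : le x y -> y * z = 0 -> x * z = 0.
Proof. by rewrite /le => <- H; rewrite -mulrA H mulr0. Qed.

Lemma le_zero' x y z : pr x -> pr y -> le x y -> z * y = 0 -> z * x = 0.
Proof. by move=> px py H H'; rewrite -(swap px py H) mulrA H' mul0r. Qed.

Lemma pr_add x y : pr x -> pr y -> x * y = 0 -> pr (x + y).
Proof.
move=> px py H; have H' := zero_swap px py H; split.
  exact: (sa_subD HA) px.1 py.1.
by rewrite mulrDl !mulrDr px.2 py.2 H H' addr0 add0r.
Qed.


Lemma le_of_zero e f : e * (1 - f) = 0 -> le e f.
Proof. by rewrite /le mulrBr mulr1 => /subr0_eq. Qed.

Lemma join_exists p q : pr p -> pr q -> exists j, is_pjoin A Apos p q j.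
Proof.
move=> pp pq.
have Aa : A (p + q) by apply: (sa_subD HA); [exact: pp.1|exact: pq.1].
have [c [Ac [cc Hc]]] := sa6 HA Aa.
have pc : pr c by [].
have A1c : A (1 - c) := (pr_compl pc).1.
have a0 : (p + q) * (1 - c) = 0.
  by apply/(Hc _ A1c); rewrite mulrBr mulr1 cc subrr.
have sum0 : (1 - c) * p * (1 - c) + (1 - c) * q * (1 - c) = 0.
  by rewrite -mulrDl -mulrDr -mulrA a0 mulr0.
have gen : forall u, pr u -> (1 - c) * u * (1 - c) + (1 - c) * (p + q - u) * (1 - c) = 0 ->
    Apos ((1 - c) * (p + q - u) * (1 - c)) -> le u c.
  move=> u pu H1 H2.
  have X0 : (1 - c) * u * (1 - c) = 0.
    apply: (sa_pos_anti HA).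
      apply: (sa3 HA); [exact: pr_pos (pr_compl pc)|exact: pr_pos pu].
    by rewrite (addr0_eq H1).
  have [_ Ho] := sa4 HA A1c (pr_pos pu) X0.
  exact: le_of_zero.
have Pp : Apos ((1 - c) * p * (1 - c)).
  by apply: (sa3 HA); [exact: pr_pos (pr_compl pc)|exact: pr_pos pp].
have Pq : Apos ((1 - c) * q * (1 - c)).
  by apply: (sa3 HA); [exact: pr_pos (pr_compl pc)|exact: pr_pos pq].
have lpc : le p c.
  have E : p + q - p = q by rewrite addrAC subrr add0r.
  by apply: gen; rewrite ?E.
have lqc : le q c.
  have E : p + q - q = p by rewrite addrK.
  by apply: gen; rewrite ?E // addrC.
exists c; split => //; split; first by apply/Ale_le.
split; first by apply/Ale_le.
move=> x px /(Ale_le pp px) Hp /(Ale_le pq px) Hq; apply/Ale_le => //.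
apply: le_of_zero; apply/(Hc _ (pr_compl px).1).
by rewrite mulrDl !mulrBr !mulr1 Hp Hq !subrr addr0.
Qed.

Lemma join_spec p q : pr p -> pr q ->
  pr (pjoin A Apos p q) /\ le p (pjoin A Apos p q) /\ le q (pjoin A Apos p q) /\
  forall x, pr x -> le p x -> le q x -> le (pjoin A Apos p q) x.
Proof.
move=> pp pq; have [j Hj] := join_exists pp pq.
have [pj [H1 [H2 H3]]] := xgetI 0 Hj; rewrite /pjoin.
split => //; split; first by apply/Ale_le.
split; first by apply/Ale_le.
by move=> x px /(Ale_le pp px) Hp /(Ale_le pq px) Hq; apply/Ale_le => //; apply: H3.
Qed.

Lemma meet_spec p q : pr p -> pr q ->
  pr (pmeet A Apos p q) /\ le (pmeet A Apos p q) p /\ le (pmeet A Apos p q) q /\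
  forall x, pr x -> le x p -> le x q -> le x (pmeet A Apos p q).
Proof.
move=> pp pq.
have [pj [H1 [H2 H3]]] := join_spec (pr_compl pp) (pr_compl pq).
set j := pjoin A Apos (1 - p) (1 - q) in pj H1 H2 H3.
have Hm : is_pmeet A Apos p q (1 - j).
  have pm := pr_compl pj.
  split => //; split.
    by apply/Ale_le => //; rewrite -[p](subKr 1); apply: compl_le => //; apply: pr_compl.
  split.
    by apply/Ale_le => //; rewrite -[q](subKr 1); apply: compl_le => //; apply: pr_compl.
  move=> x px /(Ale_le px pp) Hp /(Ale_le px pq) Hq; apply/Ale_le => //.
  rewrite -[x](subKr 1); apply: compl_le => //; first by apply: pr_compl.
  by apply: H3; [apply: pr_compl|apply: compl_le|apply: compl_le].
have [pm [K1 [K2 K3]]] := xgetI 0 Hm; rewrite /pmeet.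
split => //; split; first by apply/Ale_le.
split; first by apply/Ale_le.
by move=> x px /(Ale_le px pp) Hp /(Ale_le px pq) Hq; apply/Ale_le => //; apply: K3.
Qed.


Lemma orth_le x y z : pr y -> pr z -> le x y -> le z (1 - y) -> x * z = 0.
Proof.
move=> py pz H H'; apply: (le_zero H); apply: zero_swap => //.
exact/(orth_iff pz py).
Qed.

Lemma orth_le' x y z : pr x -> pr y -> pr z -> le x (1 - y) -> le z y -> x * z = 0.
Proof. by move=> px py pz H H'; apply: zero_swap => //; apply: (orth_le py). Qed.

Lemma porth_of x y : pr x -> pr y -> x * y = 0 -> porth Apos x y.
Proof.
move=> px py H; rewrite /porth /pperp; apply/Ale_le => //; first exact: pr_compl.
exact/orth_iff.
Qed.

Lemma meet_join_orth u v u' v' : pr u -> pr v -> u' = 1 - u -> v' = 1 - v ->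
  pmeet A Apos u v * pjoin A Apos u' v' = 0.
Proof.
move=> pu pv -> ->.
have [pm [m1 [m2 _]]] := meet_spec pu pv.
have [pj [_ [_ j3]]] := join_spec (pr_compl pu) (pr_compl pv).
apply: zero_swap => //; apply/orth_iff => //.
by apply: j3; [apply: pr_compl|apply: compl_le|apply: compl_le].
Qed.

Lemma compl_meet_le_join u v u' v' : pr u -> pr v -> u' = 1 - u -> v' = 1 - v ->
  le (1 - pmeet A Apos u' v') (pjoin A Apos u v).
Proof.
move=> pu pv -> ->.
have [pm [_ [_ m3]]] := meet_spec (pr_compl pu) (pr_compl pv).
have [pj [j1 [j2 _]]] := join_spec pu pv.
rewrite -[pjoin _ _ _ _](subKr 1); apply: compl_le => //; first exact: pr_compl.
by apply: m3; [apply: pr_compl|apply: compl_le|apply: compl_le].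
Qed.

Lemma meet3_eq e c J1 J2 : pr e -> pr c -> pr J1 -> pr J2 ->
  e * c = c * e -> A (e * c) -> le c J1 -> le c J2 ->
  le (pmeet A Apos (pmeet A Apos e J1) J2) c ->
  pmeet A Apos (pmeet A Apos e J1) J2 = e * c.
Proof.
move=> pe pc p1 p2 ec Aec c1 c2 Mc.
have [pM1 [M1e [M1J _]]] := meet_spec pe p1.
have [pM [MM1 [MJ2 uM]]] := meet_spec pM1 p2.
have pec : pr (e * c).
  by split => //; rewrite mulrA -[e * c * e]mulrA -ec mulrA pe.2 -mulrA pc.2.
have ecc : le (e * c) c by rewrite /le -mulrA pc.2.
have ece : le (e * c) e by rewrite /le ec -mulrA pe.2.
apply: le_anti => //.
  by rewrite /le mulrA (le_trans MM1 M1e) Mc.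
apply: uM => //; last exact: le_trans ecc c2.
have [_ [_ [_ uM1]]] := meet_spec pe p1.
by apply: uM1 => //; apply: le_trans ecc c1.
Qed.

End Aux.

Theorem theorem3p6 (K : realType) (R : algType K) (A Apos : set R)
  (HA : synaptic_algebra A Apos) (p q : R) (Hp : proj A p) (Hq : proj A q) :
  let meet := pmeet A Apos in
  let join := pjoin A Apos in
  let pp := pperp p in
  let qp := pperp q in
  let orth := porth Apos in
  let r_p := meet (meet p (join pp q)) (join pp qp) in
  let r_pp := meet (meet pp (join p q)) (join p qp) in
  let r_q := meet (meet q (join p qp)) (join pp qp) in
  let r_qp := meet (meet qp (join p q)) (join pp q) in
  let pq := meet (meet (meet (join p q) (join p qp)) (join pp q)) (join pp qp) in
  let a1 := meet p q in
  let a2 := meet p qp in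
  let a3 := meet pp q in
  let a4 := meet pp qp in
  (* (i) *)
  (orth r_p r_pp /\ orth r_q r_qp) /\
  (* (ii) *)
  ((orth a1 a2 /\ orth a1 a3 /\ orth a1 a4 /\ orth a1 r_p /\ orth a1 r_pp /\
       orth a2 a3 /\ orth a2 a4 /\ orth a2 r_p /\ orth a2 r_pp /\
       orth a3 a4 /\ orth a3 r_p /\ orth a3 r_pp /\ orth a4 r_p /\ orth a4 r_pp /\ orth r_p r_pp) /\
   1 = a1 + a2 + a3 + a4 + r_p + r_pp /\
   (orth (pperp pq) r_p /\ orth (pperp pq) r_pp /\ orth r_p r_pp) /\
   1 = pperp pq + r_p + r_pp) /\
  (* (iii) *)
  ((orth a1 a2 /\ orth a1 a3 /\ orth a1 a4 /\ orth a1 r_q /\ orth a1 r_qp /\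
       orth a2 a3 /\ orth a2 a4 /\ orth a2 r_q /\ orth a2 r_qp /\
       orth a3 a4 /\ orth a3 r_q /\ orth a3 r_qp /\ orth a4 r_q /\ orth a4 r_qp /\ orth r_q r_qp) /\
   1 = a1 + a2 + a3 + a4 + r_q + r_qp /\
   (orth (pperp pq) r_q /\ orth (pperp pq) r_qp /\ orth r_q r_qp) /\
   1 = pperp pq + r_q + r_qp) /\
  (* (iv) *)
  (r_p + r_pp = r_q + r_qp /\ r_q + r_qp = pq).
Proof.
move=> meet join pp qp orth r_p r_pp r_q r_qp pq a1 a2 a3 a4.
have Hpc : proj A pp := pr_compl HA Hp.
have Hqc : proj A qp := pr_compl HA Hq.
have pp1 : p = 1 - pp by rewrite /pp /pperp subKr.
have qq1 : q = 1 - qp by rewrite /qp /pperp subKr.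
have [pJ1 [pJ1' [qJ1 _]]] := join_spec HA Hp Hq.
have [pJ2 [pJ2' [qJ2 _]]] := join_spec HA Hp Hqc.
have [pJ3 [pJ3' [qJ3 _]]] := join_spec HA Hpc Hq.
have [pJ4 [pJ4' [qJ4 _]]] := join_spec HA Hpc Hqc.
have [pa1 [a1p [a1q _]]] : proj A a1 /\ le a1 p /\ le a1 q /\ _ := meet_spec HA Hp Hq.
have [pa2 [a2p [a2q _]]] : proj A a2 /\ le a2 p /\ le a2 (1 - q) /\ _ := meet_spec HA Hp Hqc.
have [pa3 [a3p [a3q _]]] : proj A a3 /\ le a3 (1 - p) /\ le a3 q /\ _ := meet_spec HA Hpc Hq.
have [pa4 [a4p [a4q _]]] : proj A a4 /\ le a4 (1 - p) /\ le a4 (1 - q) /\ _ := meet_spec HA Hpc Hqc.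
have z12 : a1 * a2 = 0 := orth_le HA Hq pa2 a1q a2q.
have z13 : a1 * a3 = 0 := orth_le HA Hp pa3 a1p a3p.
have z14 : a1 * a4 = 0 := orth_le HA Hp pa4 a1p a4p.
have z23 : a2 * a3 = 0 := orth_le HA Hp pa3 a2p a3p.
have z24 : a2 * a4 = 0 := orth_le HA Hp pa4 a2p a4p.
have z34 : a3 * a4 = 0 := orth_le HA Hq pa4 a3q a4q.
have z21 := zero_swap HA pa1 pa2 z12.
have z31 := zero_swap HA pa1 pa3 z13.
have z41 := zero_swap HA pa1 pa4 z14.
have z32 := zero_swap HA pa2 pa3 z23.
have z42 := zero_swap HA pa2 pa4 z24.
have z43 := zero_swap HA pa3 pa4 z34.
set s := a1 + a2 + a3 + a4.
have ps : proj A s.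
  apply: (pr_add HA) => //; last by rewrite !mulrDl z14 z24 z34 !addr0.
  apply: (pr_add HA) => //; last by rewrite !mulrDl z13 z23 addr0.
  exact: (pr_add HA).
have a1s : le a1 s by rewrite /le /s !mulrDr pa1.2 z12 z13 z14 !addr0.
have a2s : le a2 s by rewrite /le /s !mulrDr pa2.2 z21 z23 z24 add0r !addr0.
have a3s : le a3 s by rewrite /le /s !mulrDr pa3.2 z31 z32 z34 !add0r addr0.
have a4s : le a4 s by rewrite /le /s !mulrDr pa4.2 z41 z42 z43 !add0r.
have o3p : a3 * p = 0 by apply: (orth_iff pa3 Hp).1.
have o4p : a4 * p = 0 by apply: (orth_iff pa4 Hp).1.
have o2q : a2 * q = 0 by apply: (orth_iff pa2 Hq).1.
have o4q : a4 * q = 0 by apply: (orth_iff pa4 Hq).1.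
have sp : s * p = a1 + a2 by rewrite /s !mulrDl a1p a2p o3p o4p !addr0.
have ps' : p * s = a1 + a2.
  by rewrite /s !mulrDr (swap HA pa1 Hp a1p) (swap HA pa2 Hp a2p)
    (zero_swap HA pa3 Hp o3p) (zero_swap HA pa4 Hp o4p) !addr0.
have sq : s * q = a1 + a3 by rewrite /s !mulrDl a1q a3q o2q o4q !addr0.
have qs : q * s = a1 + a3.
  by rewrite /s !mulrDr (swap HA pa1 Hq a1q) (swap HA pa3 Hq a3q)
    (zero_swap HA pa2 Hq o2q) (zero_swap HA pa4 Hq o4q) !addr0.
have [pM1 [M1J1 [M1J2 _]]] := meet_spec HA pJ1 pJ2.
have [pM2 [M2M1 [M2J3 _]]] := meet_spec HA pM1 pJ3.
have [pc [cM2 [cJ4 ucM]]] : proj A pq /\ le pq _ /\ le pq _ /\ _ := meet_spec HA pM2 pJ4.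
have cJ1 : le pq (join p q) by apply: le_trans cM2 (le_trans M2M1 M1J1).
have cJ2 : le pq (join p qp) by apply: le_trans cM2 (le_trans M2M1 M1J2).
have cJ3 : le pq (join pp q) by apply: le_trans cM2 M2J3.
have J1a4 : join p q * a4 = 0 := zero_swap HA pa4 pJ1 (meet_join_orth HA Hpc Hqc pp1 qq1).
have J2a3 : join p qp * a3 = 0 := zero_swap HA pa3 pJ2 (meet_join_orth HA Hpc Hq pp1 erefl).
have J3a2 : join pp q * a2 = 0 := zero_swap HA pa2 pJ3 (meet_join_orth HA Hp Hqc erefl qq1).
have J4a1 : join pp qp * a1 = 0 := zero_swap HA pa1 pJ4 (meet_join_orth HA Hp Hq erefl erefl).
have Hc : pq = 1 - s.
  apply: (le_anti HA pc (pr_compl HA ps)).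
    apply: le_of_zero; rewrite subKr /s !mulrDr.
    by rewrite (le_zero cJ4 J4a1) (le_zero cJ3 J3a2) (le_zero cJ2 J2a3) (le_zero cJ1 J1a4) !addr0.
  have ps1 := pr_compl HA ps.
  have [_ [_ [_ uM1]]] := meet_spec HA pJ1 pJ2.
  have [_ [_ [_ uM2]]] := meet_spec HA pM1 pJ3.
  apply: ucM => //; [apply: uM2 => //; [apply: uM1 => //|]|].
  - exact: le_trans (compl_le HA pa4 ps a4s) (compl_meet_le_join HA Hp Hq erefl erefl).
  - exact: le_trans (compl_le HA pa3 ps a3s) (compl_meet_le_join HA Hp Hqc erefl qq1).
  - exact: le_trans (compl_le HA pa2 ps a2s) (compl_meet_le_join HA Hpc Hq pp1 erefl).
  - exact: le_trans (compl_le HA pa1 ps a1s) (compl_meet_le_join HA Hpc Hqc pp1 qq1).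
have Ap := Hp.1.
have Aq := Hq.1.
have Aa12 : A (a1 + a2) := sa_subD HA pa1.1 pa2.1.
have Aa13 : A (a1 + a3) := sa_subD HA pa1.1 pa3.1.
have pcp : p * pq = pq * p by rewrite Hc mulrBr mulrBl mulr1 mul1r ps' sp.
have qcq : q * pq = pq * q by rewrite Hc mulrBr mulrBl mulr1 mul1r qs sq.
have Apc : A (p * pq) by rewrite Hc mulrBr mulr1 ps'; apply: (A_sub HA).
have Aqc : A (q * pq) by rewrite Hc mulrBr mulr1 qs; apply: (A_sub HA).
have ppcp : pp * pq = pq * pp by rewrite /pp /pperp mulrBr mulrBl mulr1 mul1r pcp.
have qpcq : qp * pq = pq * qp by rewrite /qp /pperp mulrBr mulrBl mulr1 mul1r qcq.
have Appc : A (pp * pq) by rewrite /pp /pperp mulrBl mul1r; apply: (A_sub HA) => //; exact: pc.1.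
have Aqpc : A (qp * pq) by rewrite /qp /pperp mulrBl mul1r; apply: (A_sub HA) => //; exact: pc.1.
have cs : pq * (1 - pq) = 0 by rewrite mulrBr mulr1 pc.2 subrr.
have c1s : 1 - pq = s by rewrite Hc subKr.
have [pN1 [N1e [N1J _]]] := meet_spec HA Hp pJ3.
have [prp [rpN1 [rpJ4 _]]] : proj A r_p /\ le r_p _ /\ le r_p _ /\ _ := meet_spec HA pN1 pJ4.
have rpp : le r_p p := le_trans rpN1 N1e.
have rpJ3 : le r_p (join pp q) := le_trans rpN1 N1J.
have rps : r_p * s = 0.
  rewrite /s !mulrDr (le_zero rpJ4 J4a1) (le_zero rpJ3 J3a2).
  by rewrite (orth_le HA Hp pa3 rpp a3p) (orth_le HA Hp pa4 rpp a4p) !addr0.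
have rpc : le r_p pq by apply: le_of_zero; rewrite c1s.
have Erp : r_p = p * pq := meet3_eq HA Hp pc pJ3 pJ4 pcp Apc cJ3 cJ4 rpc.
have [pN2 [N2e [N2J _]]] := meet_spec HA Hpc pJ1.
have [prpp [rppN2 [rppJ2 _]]] : proj A r_pp /\ le r_pp _ /\ le r_pp _ /\ _ := meet_spec HA pN2 pJ2.
have rppp : le r_pp (1 - p) := le_trans rppN2 N2e.
have rppJ1 : le r_pp (join p q) := le_trans rppN2 N2J.
have rpps : r_pp * s = 0.
  rewrite /s !mulrDr (le_zero rppJ1 J1a4) (le_zero rppJ2 J2a3).
  by rewrite (orth_le' HA prpp Hp pa1 rppp a1p) (orth_le' HA prpp Hp pa2 rppp a2p) !addr0.
have rppc : le r_pp pq by apply: le_of_zero; rewrite c1s.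
have Erpp : r_pp = pp * pq := meet3_eq HA Hpc pc pJ1 pJ2 ppcp Appc cJ1 cJ2 rppc.
have [pN3 [N3e [N3J _]]] := meet_spec HA Hq pJ2.
have [prq [rqN3 [rqJ4 _]]] : proj A r_q /\ le r_q _ /\ le r_q _ /\ _ := meet_spec HA pN3 pJ4.
have rqq : le r_q q := le_trans rqN3 N3e.
have rqJ2 : le r_q (join p qp) := le_trans rqN3 N3J.
have rqs : r_q * s = 0.
  rewrite /s !mulrDr (le_zero rqJ4 J4a1) (le_zero rqJ2 J2a3).
  by rewrite (orth_le HA Hq pa2 rqq a2q) (orth_le HA Hq pa4 rqq a4q) !addr0.
have rqc : le r_q pq by apply: le_of_zero; rewrite c1s.
have Erq : r_q = q * pq := meet3_eq HA Hq pc pJ2 pJ4 qcq Aqc cJ2 cJ4 rqc.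
have [pN4 [N4e [N4J _]]] := meet_spec HA Hqc pJ1.
have [prqp [rqpN4 [rqpJ3 _]]] : proj A r_qp /\ le r_qp _ /\ le r_qp _ /\ _ := meet_spec HA pN4 pJ3.
have rqpq : le r_qp (1 - q) := le_trans rqpN4 N4e.
have rqpJ1 : le r_qp (join p q) := le_trans rqpN4 N4J.
have rqps : r_qp * s = 0.
  rewrite /s !mulrDr (le_zero rqpJ1 J1a4) (le_zero rqpJ3 J3a2).
  by rewrite (orth_le' HA prqp Hq pa1 rqpq a1q) (orth_le' HA prqp Hq pa3 rqpq a3q) !addr0.
have rqpc : le r_qp pq by apply: le_of_zero; rewrite c1s.
have Erqp : r_qp = qp * pq := meet3_eq HA Hqc pc pJ1 pJ3 qpcq Aqpc cJ1 cJ3 rqpc.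
have rpc' : le r_p (1 - s) by rewrite -Hc.
have z1r_p : a1 * r_p = 0 := orth_le HA ps prp a1s rpc'.
have z2r_p : a2 * r_p = 0 := orth_le HA ps prp a2s rpc'.
have z3r_p : a3 * r_p = 0 := orth_le HA ps prp a3s rpc'.
have z4r_p : a4 * r_p = 0 := orth_le HA ps prp a4s rpc'.
have zcr_p : pperp pq * r_p = 0 by rewrite /pperp c1s; exact: (zero_swap HA prp ps rps).
have rppc' : le r_pp (1 - s) by rewrite -Hc.
have z1r_pp : a1 * r_pp = 0 := orth_le HA ps prpp a1s rppc'.
have z2r_pp : a2 * r_pp = 0 := orth_le HA ps prpp a2s rppc'.
have z3r_pp : a3 * r_pp = 0 := orth_le HA ps prpp a3s rppc'.
have z4r_pp : a4 * r_pp = 0 := orth_le HA ps prpp a4s rppc'.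
have zcr_pp : pperp pq * r_pp = 0 by rewrite /pperp c1s; exact: (zero_swap HA prpp ps rpps).
have rqc' : le r_q (1 - s) by rewrite -Hc.
have z1r_q : a1 * r_q = 0 := orth_le HA ps prq a1s rqc'.
have z2r_q : a2 * r_q = 0 := orth_le HA ps prq a2s rqc'.
have z3r_q : a3 * r_q = 0 := orth_le HA ps prq a3s rqc'.
have z4r_q : a4 * r_q = 0 := orth_le HA ps prq a4s rqc'.
have zcr_q : pperp pq * r_q = 0 by rewrite /pperp c1s; exact: (zero_swap HA prq ps rqs).
have rqpc' : le r_qp (1 - s) by rewrite -Hc.
have z1r_qp : a1 * r_qp = 0 := orth_le HA ps prqp a1s rqpc'.
have z2r_qp : a2 * r_qp = 0 := orth_le HA ps prqp a2s rqpc'.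
have z3r_qp : a3 * r_qp = 0 := orth_le HA ps prqp a3s rqpc'.
have z4r_qp : a4 * r_qp = 0 := orth_le HA ps prqp a4s rqpc'.
have zcr_qp : pperp pq * r_qp = 0 by rewrite /pperp c1s; exact: (zero_swap HA prqp ps rqps).
have zrp : r_p * r_pp = 0 := orth_le HA Hp prpp rpp rppp.
have zrq : r_q * r_qp = 0 := orth_le HA Hq prqp rqq rqpq.
have pcc : proj A (pperp pq) := pr_compl HA pc.
have Hsp : r_p + r_pp = pq by rewrite Erp Erpp /pp /pperp mulrBl mul1r addrC subrK.
have Hsq : r_q + r_qp = pq by rewrite Erq Erqp /qp /pperp mulrBl mul1r addrC subrK.
repeat split; try (apply: (porth_of HA); assumption).
- by rewrite -addrA Hsp Hc addrC subrK.
- by rewrite -addrA Hsp /pperp subrK.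
- by rewrite -addrA Hsq Hc addrC subrK.
- by rewrite -addrA Hsq /pperp subrK.
- by rewrite Hsp Hsq.
- exact: Hsq.
Qed.
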